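(* Let $\Gamma=\mathbb F_r$ and let $\varepsilon_c=\varepsilon_c(r)$ be the constant defined below. If $\varepsilon<\varepsilon_c$, then for all sufficiently small $\delta>0$, \[\liminf_{n\to\infty}\frac1n\log\mathbb P\Big(\frac{\mathsf{mcut}(\sigma_n)}{rn}<\varepsilon+\delta\Big)<0,\] where $\sigma_n\in\mathrm{Hom}(\mathbb F_r,\mathrm{Sym}([n]))$ is uniformly random.
   Context: $\Gamma=\mathbb F_r$ is the free group on $s_1,\dots,s_r$. For a finite set $V$ and $\sigma\in\mathrm{Hom}(\mathbb F_r,\mathrm{Sym}(V))$, the graph of $\sigma$ is the multigraph with one edge $\{v,\sigma(s_i)v\}$ for each $v\in V$, $i\in[r]$ (so $|V|r$ edges). A bisection of $V$ is a partition $V=V_1\sqcup V_2$ with $||V_1|-|V_2||\le1$; its cut size is the number of edges with endpoints in different parts; $\mathsf{mcut}(\sigma)$ is the minimum cut size over bisections of the graph of $\sigma$. $\sigma_n\in\mathrm{Hom}(\mathbb F_r,\mathrm{Sym}([n]))$ is uniformly random, i.e. $\sigma_n(s_1),\dots,\sigma_n(s_r)$ are independent uniform permutations of $[n]$. The constant $\varepsilon_c=\varepsilon_c(r)$ is the limit in probability of $\mathsf{mcut}(\sigma_n)/(rn)$ as $n\to\infty$ (its existence, with $\varepsilon_c=\frac12-\mathsf P_*\frac1{\sqrt{2r}}+o_r(r^{-1/2})$, $\mathsf P_*\approx0.7632$, is due to Dembo–Montanari–Sen, and may be assumed). *)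

(* Defs.v *)
From HB Require Import structures.
From mathcomp Require Import all_boot all_order all_algebra.
From mathcomp Require Import perm.
From mathcomp Require Import all_classical all_reals all_analysis.
Set Implicit Arguments. Unset Strict Implicit. Unset Printing Implicit Defensive.
Import Order.TTheory GRing.Theory Num.Theory.
Import numFieldNormedType.Exports.
Local Open Scope ring_scope.

(* A homomorphism F_r -> Sym([n]) is the same as an r-tuple of permutations
   (images of the free generators s_1..s_r). *)
Definition hom_Fr (r n : nat) := {ffun 'I_r -> {perm 'I_n}}.

Definition is_bisection (n : nat) (A : {set 'I_n}) : bool :=
  (#|A| <= #|~: A| + 1)%N && (#|~: A| <= #|A| + 1)%N.

(* The graph of sigma has one edge {v, sigma(s_i) v} per pair (v,i);
   cut size = number of such edges with endpoints in different parts. *)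
Definition cut_size (r n : nat) (s : hom_Fr r n) (A : {set 'I_n}) : nat :=
  #|[set p : 'I_n * 'I_r | (p.1 \in A) != (s p.2 p.1 \in A)]|.

(* Minimum cut size over bisections (bisections always exist; r*n is an
   upper bound on every cut size, used only as the neutral element). *)
Definition mcut (r n : nat) (s : hom_Fr r n) : nat :=
  \big[minn/(r * n)%N]_(A : {set 'I_n} | is_bisection A) cut_size s A.

Definition prob (R : realType) (r n : nat) (E : pred (hom_Fr r n)) : R :=
  (#|E|%:R) / (#|{: hom_Fr r n}|%:R).

Definition mcut_ratio (R : realType) (r n : nat) (s : hom_Fr r n) : R :=
  (mcut s)%:R / (r * n)%:R.

Definition log_rate (R : realType) (n : nat) (p : R) : \bar R :=
  if p == 0 then -oo%E else ((ln p) / n%:R)%:E.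

Arguments prob {R r n} E.
Arguments mcut_ratio {R r n} s.
Arguments log_rate {R} n p.

(* Main.v *)
Require Import Defs.
From HB Require Import structures.
From mathcomp Require Import all_boot all_order all_algebra.
From mathcomp Require Import perm.
From mathcomp Require Import all_classical all_reals all_analysis.
From mathcomp Require Import zify ring lra.
Import Order.TTheory GRing.Theory Num.Theory.
Import numFieldNormedType.Exports.
Set Implicit Arguments. Unset Strict Implicit. Unset Printing Implicit Defensive.

Section PartA.
Variables r n : nat.
Local Notation hom := (hom_Fr r.+1 n.+1).

Definition Pset (b : nat) : {set {perm 'I_n.+1}} :=
  [set s : {perm 'I_n.+1} | [forall x : 'I_n.+1, (b <= x)%N ==> (s x == x)]].
Definition bnd (i m : nat) := minn n.+1 (m - i * n.+1).
Definition Sset m : {set hom} :=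
  [set f : hom | [forall i : 'I_r.+1, f i \in Pset (bnd i m)]].
Definition updf (i : 'I_r.+1) (t : {perm 'I_n.+1}) (f : hom) : hom :=
  [ffun i' => if i' == i then (f i' * t)%g else f i'].
Definition upd (m j : nat) (f : hom) : hom :=
  updf (inord (m %/ n.+1)) (tperm (inord (m %% n.+1)) (inord j)) f.
Definition one_hom : hom := [ffun _ => (1%g : {perm 'I_n.+1})].

Lemma updfK i (x y : 'I_n.+1) f : updf i (tperm x y) (updf i (tperm x y) f) = f.
Proof.
apply/ffunP => i'; rewrite !ffunE; case: eqP => // ->.
by apply/permP => v; rewrite !permM tpermK.
Qed.

Lemma updK m j f : upd m j (upd m j f) = f.
Proof. exact: updfK. Qed.

Lemma PsetP b (s : {perm 'I_n.+1}) : reflect (forall x : 'I_n.+1, (b <= x)%N -> s x = x) (s \in Pset b).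
Proof.
rewrite inE; apply: (iffP forallP) => H x.
  by move=> bx; move: (H x); rewrite bx => /eqP.
by apply/implyP => /H ->.
Qed.

Lemma Pset_lt k (s : {perm 'I_n.+1}) : (k < n.+1)%N -> s \in Pset k.+1 -> (s (inord k) <= k)%N.
Proof.
move=> hk /PsetP H; rewrite leqNgt; apply/negP => hlt.
have := H (s (inord k)) hlt => /perm_inj E.
by move: hlt; rewrite E inordK // ltnn.
Qed.

Lemma P_step k j (s : {perm 'I_n.+1}) : (k < n.+1)%N -> (j <= k)%N ->
  ((s * tperm (inord k) (inord j))%g \in Pset k.+1) &&
  ((s * tperm (inord k) (inord j))%g (inord k) == inord j) = (s \in Pset k).
Proof.
move=> hk hj; set t := tperm _ _.
have jn : (j < n.+1)%N by apply: leq_ltn_trans hk.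
apply/andP/PsetP.
  case=> /PsetP A /eqP B x kx.
  have -> : s x = t ((s * t)%g x) by rewrite permM tpermK.
  case: (ltngtP k x) kx => // [kx _|kx _].
    rewrite A // tpermD //; apply/negP => /eqP E.
      by move: kx; rewrite -E inordK // ltnn.
    by move: kx; rewrite -E inordK // ltnNge hj.
  have -> : x = inord k by apply/val_inj; rewrite /= inordK.
  by rewrite B tpermR.
move=> A; split.
  apply/PsetP => x kx; rewrite permM A ?(ltnW kx) // tpermD //; apply/negP => /eqP E.
    by move: kx; rewrite -E inordK // ltnn.
  by move: kx; rewrite -E inordK // ltnNge (leq_trans hj).
by rewrite permM A ?inordK // tpermL.
Qed.

Lemma SsetP m (f : hom) : reflect (forall i : 'I_r.+1, f i \in Pset (bnd i m)) (f \in Sset m).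
Proof. by rewrite inE; apply: forallP. Qed.

Lemma bnd_step m (i : 'I_r.+1) : (m < r.+1 * n.+1)%N ->
  if i == inord (m %/ n.+1) :> 'I_r.+1 then
    bnd i m = m %% n.+1 /\ bnd i m.+1 = (m %% n.+1).+1
  else bnd i m = bnd i m.+1.
Proof.
move=> hm; have hq : (m %/ n.+1 < r.+1)%N by rewrite ltn_divLR.
have E : m = (m %/ n.+1 * n.+1 + m %% n.+1)%N by rewrite -divn_eq.
have hr : (m %% n.+1 < n.+1)%N by rewrite ltn_mod.
rewrite /bnd; case: eqP => [->|ne].
  rewrite inordK //; split; lia.
have ne' : (i : nat) <> m %/ n.+1 by move=> e; apply: ne; apply/val_inj; rewrite /= inordK.
case: (ltngtP i (m %/ n.+1)) => [lt|gt|//].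
  have : (i.+1 * n.+1 <= m %/ n.+1 * n.+1)%N by rewrite leq_mul2r lt orbT.
  rewrite mulSn; lia.
have : (m %/ n.+1).+1 * n.+1 <= i * n.+1 by rewrite leq_mul2r gt orbT.
rewrite mulSn; lia.
Qed.

Lemma inord_eqE k (x : 'I_n.+1) (j : 'I_k.+1) : (x <= k)%N -> (k < n.+1)%N ->
  (inord x == j :> 'I_k.+1) = (x == inord j).
Proof.
move=> xk kn; have jn : (j < n.+1)%N by apply: leq_ltn_trans kn; rewrite -ltnS.
apply/eqP/eqP => [<-|->]; apply/val_inj; rewrite /= !inordK //.
Qed.

Lemma S_step m (j : 'I_(m %% n.+1).+1) (f : hom) : (m < r.+1 * n.+1)%N ->
  (upd m j f \in Sset m.+1) &&
  (inord (upd m j f (inord (m %/ n.+1)) (inord (m %% n.+1))) == j :> 'I_(m %% n.+1).+1)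
  = (f \in Sset m).
Proof.
move=> hm; have hk : (m %% n.+1 < n.+1)%N by rewrite ltn_mod.
have hj : (j <= m %% n.+1)%N by rewrite -ltnS.
have hst := bnd_step _ hm.
apply/andP/SsetP.
  case=> /SsetP A B i; move: (A i) (hst i); rewrite /upd /updf ffunE.
  case: eqP => [-> C [D1 D2]|_ C D]; last by rewrite D.
  rewrite D1 -(P_step _ hk hj); apply/andP; split; first by move: C; rewrite D2.
  move: B; rewrite /upd /updf ffunE eqxx inord_eqE //.
  by apply: Pset_lt => //; move: C; rewrite D2.
move=> A; split.
  apply/SsetP => i; move: (A i) (hst i); rewrite /upd /updf ffunE.
  case: eqP => [-> C [D1 D2]|_ C D]; last by rewrite -D.
  by rewrite D2; move: C; rewrite D1 -(P_step _ hk hj) => /andP[].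
have := A (inord (m %/ n.+1)); have := hst (inord (m %/ n.+1)); rewrite eqxx => -[D1 _].
rewrite D1 -(P_step _ hk hj) => /andP[_ /eqP C].
rewrite /upd /updf ffunE eqxx C; apply/eqP/val_inj; rewrite /= !inordK //.
all: exact: leq_ltn_trans hj hk.
Qed.

Lemma sum_step (R : nmodType) (G : hom -> R) m : (m < r.+1 * n.+1)%N ->
  (\sum_(f in Sset m.+1) G f =
  \sum_(j < (m %% n.+1).+1) \sum_(f in Sset m) G (upd m j f))%R.
Proof.
move=> hm.
rewrite (partition_big (fun f : hom => (inord (f (inord (m %/ n.+1)) (inord (m %% n.+1))) : 'I_(m %% n.+1).+1)) xpredT) //.
apply: eq_bigr => j _.
rewrite (reindex_onto (upd m j) (upd m j)); last by move=> f _; apply: updK.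
by apply: eq_bigl => f; rewrite updK eqxx andbT S_step.
Qed.

Lemma one_in_S m : one_hom \in Sset m.
Proof. by apply/SsetP => i; apply/PsetP => x _; rewrite ffunE perm1. Qed.

Lemma S0 : Sset 0 = [set one_hom].
Proof.
apply/setP => f; rewrite finset.in_set1; apply/idP/eqP => [/SsetP A|->]; last exact: one_in_S.
apply/ffunP => i; rewrite ffunE; apply/permP => x; rewrite perm1.
by move: (A i) => /PsetP ->.
Qed.

Lemma S_full : Sset (r.+1 * n.+1) = [set: hom]%SET.
Proof.
apply/setP => f; rewrite finset.in_setT; apply/SsetP => i; apply/PsetP => x.
have hi := ltn_ord i.
suff -> : bnd i (r.+1 * n.+1) = n.+1 by rewrite leqNgt ltn_ord.
rewrite /bnd; apply/minn_idPl.
have : (i.+1 * n.+1 <= r.+1 * n.+1)%N by rewrite leq_mul2r hi orbT.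
rewrite mulSn; lia.
Qed.

Definition Dh (f g : hom) :=
  #|[set p : 'I_n.+1 * 'I_r.+1 | f p.2 p.1 != g p.2 p.1]|.

Lemma Dh_sym f g : Dh f g = Dh g f.
Proof. by apply: eq_card => p; rewrite !inE eq_sym. Qed.

Lemma Dh_updf i t f g : Dh (updf i t f) (updf i t g) = Dh f g.
Proof.
apply: eq_card => p; rewrite !inE /updf !ffunE.
case: ifP => // _; by rewrite !permM (inj_eq perm_inj).
Qed.

Lemma Dh_upd m j f g : Dh (upd m j f) (upd m j g) = Dh f g.
Proof. exact: Dh_updf. Qed.

Lemma Dh_nb m j j' f : (Dh (upd m j f) (upd m j' f) <= 3)%N.
Proof.
pose i0 : 'I_r.+1 := inord (m %/ n.+1); pose kk : 'I_n.+1 := inord (m %% n.+1).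
pose s := f i0.
rewrite /Dh; apply: leq_trans (_ : #|[:: ((s^-1)%g kk, i0); ((s^-1)%g (inord j), i0); ((s^-1)%g (inord j'), i0)]| <= 3)%N; last exact: card_size.
apply: subset_leq_card; apply/fintype.subsetP => -[v i]; rewrite inE /= /upd /updf !ffunE.
case: ifP => [/eqP ->|_]; last by rewrite eqxx.
rewrite !permM => H.
rewrite !inE !xpair_eqE !eqxx !andbT.
case: (eqVneq (s v) kk) => [E|n1]; first by rewrite -E permK eqxx.
case: (eqVneq (s v) (inord j)) => [E|n2]; first by rewrite -E permK eqxx orbT.
case: (eqVneq (s v) (inord j')) => [E|n3]; first by rewrite -E permK eqxx !orbT.
by move: H; rewrite !tpermD ?eqxx // eq_sym.
Qed.

Lemma cut_Lip f g A : (cut_size f A <= cut_size g A + Dh f g)%N.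
Proof.
rewrite /cut_size /Dh.
set S1 := [set p | _]; set S2 := [set p | _]; set D := [set p | _].
apply: leq_trans (subset_leq_card (_ : S1 \subset S2 :|: D)) _.
  apply/fintype.subsetP => p; rewrite !inE => H; case: (eqVneq (f p.2 p.1) (g p.2 p.1)) => [E|]; [by rewrite -E H | by rewrite orbT].
by rewrite cardsU leq_subr.
Qed.

Lemma mcut_Lip f g : (mcut f <= mcut g + Dh f g)%N.
Proof.
rewrite /mcut; apply: (big_ind2 (fun a b => a <= b + Dh f g)%N).
- exact: leq_addr.
- move=> x1 x2 y1 y2 h1 h2; rewrite /minn; case: ifP; case: ifP; lia.
- by move=> A _; exact: cut_Lip.
Qed.

End PartA.

Local Open Scope classical_set_scope.
Local Open Scope ring_scope.

Lemma expR_quad (R : realType) (y : R) : y <= 1/2 -> expR y <= 1 + y + 2 * y ^+ 2.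
Proof.
move=> hy.
have h1 : 1 - y <= expR (- y) by have := expR_ge1Dx (- y); lra.
have h2 : expR y * expR (- y) = 1 by rewrite -expRD subrr expR0.
have h3 : 0 < expR y := expR_gt0 y.
have h4 : expR y * (1 - y) <= 1 by rewrite -[X in _ <= X]h2 ler_pM2l.
nra.
Qed.

Lemma hoeff (R : realType) k (x : 'I_k.+1 -> R) (lam : R) :
  `|lam| * 3 <= 1/2 -> (forall a b, x a - x b <= 3) ->
  (k.+1%:R)^-1 * \sum_j expR (lam * (x j - (k.+1%:R)^-1 * \sum_i x i))
    <= expR (18 * lam ^+ 2).
Proof.
move=> hl hx; set c : R := k.+1%:R; set mu := c^-1 * \sum_i x i.
have c0 : 0 < c by rewrite /c ltr0n.
have hmu j : `|x j - mu| <= 3.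
  have e : x j - mu = c^-1 * \sum_i (x j - x i).
    rewrite sumrB sumr_const card_ord -mulr_natr -/c /mu; field.
    by rewrite gt_eqF.
  rewrite e normrM (ger0_norm (_ : 0 <= c^-1)); last by rewrite invr_ge0 ltW.
  have S : `|\sum_i (x j - x i)| <= c * 3.
    apply: le_trans (ler_norm_sum _ _ _) _.
    have B i : `|x j - x i| <= 3.
      by rewrite ler_norml; have := hx j i; have := hx i j; move=> h1 h2; apply/andP; split; lra.
    apply: le_trans (ler_sum _ (fun i _ => B i)) _.
    by rewrite sumr_const card_ord mulr_natl.
  by rewrite -(ler_pM2l c0) mulrA mulfV ?gt_eqF // mul1r.
have hy j : expR (lam * (x j - mu)) <= 1 + lam * (x j - mu) + 18 * lam ^+ 2.
  set d := x j - mu.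
  have hd := hmu j; rewrite -/d in hd.
  have hb : `|lam * d| <= 1/2.
    rewrite normrM; apply: le_trans hl; exact: (ler_wpM2l (normr_ge0 lam) hd).
  apply: le_trans (expR_quad _) _; first by apply: le_trans (ler_norm _) hb.
  have hd2 : d ^+ 2 <= 9.
    rewrite -real_normK ?num_real // (_ : 9 = 3 ^+ 2); last by rewrite expr2; lra.
    by rewrite ler_sqr ?nnegrE ?normr_ge0 //; lra.
  have : 0 <= lam ^+ 2 * (9 - d ^+ 2) by apply: mulr_ge0; [exact: sqr_ge0 | lra].
  rewrite exprMn; lra.
apply: le_trans (_ : c^-1 * \sum_j (1 + lam * (x j - mu) + 18 * lam ^+ 2) <= _).
  by rewrite ler_pM2l ?invr_gt0 //; apply: ler_sum => j _; exact: hy.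
have s0 : \sum_j lam * (x j - mu) = 0.
  rewrite -mulr_sumr sumrB sumr_const card_ord -mulr_natl -/c /mu mulrA mulfV ?gt_eqF //.
  by rewrite mul1r subrr mulr0.
have -> : c^-1 * \sum_j (1 + lam * (x j - mu) + 18 * lam ^+ 2) = 1 + 18 * lam ^+ 2.
  rewrite big_split /= big_split /= s0 addr0 sumr_const card_ord -mulr_natl -/c.
  rewrite sumr_const card_ord -[_ *+ k.+1]mulr_natl -/c.
  by field; rewrite gt_eqF.

by have := expR_ge1Dx (18 * lam ^+ 2); lra.
Qed.


Section PartB.
Variables (R : realType) (r n : nat).
Local Notation hom := (hom_Fr r.+1 n.+1).
Local Notation S := (Sset r n).

Definition savg m (G : hom -> R) : R := (\sum_(f in S m) G f) / (#|S m|%:R).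

Lemma card_S_pos m : (0 < #|S m|)%N.
Proof. by apply/card_gt0P; exists (one_hom r n); exact: one_in_S. Qed.

Lemma card_S_neq0 m : (#|S m|%:R : R) != 0.
Proof. by rewrite pnatr_eq0 -lt0n card_S_pos. Qed.

Lemma savg_le m G H : (forall f, G f <= H f) -> savg m G <= savg m H.
Proof.
move=> h; rewrite /savg ler_pM2r ?invr_gt0 ?ltr0n ?card_S_pos //.
by apply: ler_sum => f _; exact: h.
Qed.

Lemma savg_cst m c : savg m (fun _ => c) = c.
Proof. by rewrite /savg sumr_const -[c *+ _]mulr_natr mulfK // card_S_neq0. Qed.

Lemma savgZ m c G : savg m (fun f => c * G f) = c * savg m G.
Proof. by rewrite /savg -mulr_sumr mulrA. Qed.

Lemma savgB m G H : savg m (fun f => G f - H f) = savg m G - savg m H.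
Proof. by rewrite /savg sumrB mulrBl. Qed.

Lemma savg0 G : savg 0 G = G (one_hom r n).
Proof. by rewrite /savg S0 big_set1 cards1 divr1. Qed.

Lemma savg_step m G : (m < r.+1 * n.+1)%N ->
  savg m.+1 G = ((m %% n.+1).+1%:R)^-1 *
     \sum_(j < (m %% n.+1).+1) savg m (fun f => G (upd m j f)).
Proof.
move=> hm.
have hc : (#|S m.+1|%:R : R) = (m %% n.+1).+1%:R * #|S m|%:R.
  have := sum_step (fun _ : hom => (1:R)) hm.
  by rewrite !sumr_const card_ord -mulrnA => ->; rewrite natrM mulrC.
rewrite /savg sum_step // hc -mulr_suml.
have := card_S_neq0 m; move=> h1.
have h2 : ((m %% n.+1).+1%:R : R) != 0 by rewrite pnatr_eq0.
by rewrite invfM mulrCA.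
Qed.

Definition Lip (G : hom -> R) := forall f g, G f - G g <= (Dh f g)%:R.

Lemma Lip_upd G m j : Lip G -> Lip (fun f => G (upd m j f)).
Proof. by move=> L f g; rewrite -(Dh_upd m j). Qed.

Lemma mcd m G lam : (m <= r.+1 * n.+1)%N -> Lip G -> `|lam| * 3 <= 1/2 ->
  savg m (fun f => expR (lam * (G f - savg m G))) <= expR (18 * lam ^+ 2 * m%:R).
Proof.
elim: m G => [|m IH] G hm L hl.
  by rewrite !savg0 subrr !mulr0 expR0.
set k := (m %% n.+1)%N.
pose g (j : 'I_k.+1) := savg m (fun f => G (upd m j f)).
have Emu : savg m.+1 G = (k.+1%:R)^-1 * \sum_j g j by rewrite savg_step.
rewrite Emu savg_step //.
set mu := (k.+1%:R)^-1 * \sum_j g j.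
have step (j : 'I_k.+1) : savg m (fun f => expR (lam * (G (upd m j f) - mu)))
    <= expR (lam * (g j - mu)) * expR (18 * lam ^+ 2 * m%:R).
  have -> : (fun f => expR (lam * (G (upd m j f) - mu))) =
     (fun f => expR (lam * (g j - mu)) * expR (lam * (G (upd m j f) - g j))).
    by apply: funext => f; rewrite -expRD; congr expR; ring.
  rewrite savgZ ler_pM2l ?expR_gt0 //.
  by apply: IH => //; [exact: ltnW | exact: Lip_upd].
apply: le_trans (_ : (k.+1%:R)^-1 * \sum_j (expR (lam * (g j - mu)) * expR (18 * lam ^+ 2 * m%:R)) <= _).
  by rewrite ler_pM2l ?invr_gt0 ?ltr0n //; apply: ler_sum => j _; exact: step.
rewrite -mulr_suml mulrA.
have hg : forall a b, g a - g b <= 3.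
  move=> a b; rewrite /g -savgB.
  have hf : forall f, G (upd m a f) - G (upd m b f) <= 3.
    move=> f; apply: le_trans (L _ _) _.
    by rewrite (_ : 3 = 3%:R :> R) // ler_nat Dh_nb.
  by apply: le_trans (savg_le (H := fun _ => 3) _ hf) _; rewrite savg_cst.
have H := hoeff hl hg.
apply: le_trans (ler_wpM2r (ltW (expR_gt0 _)) H) _.
rewrite -expRD ler_expR (_ : (m.+1%:R : R) = m%:R + 1); last by rewrite -natr1.
set z := lam ^+ 2; set w : R := m%:R; lra.
Qed.

Lemma chernoff G (E : pred hom) mu s lam : Lip G -> 0 <= lam -> lam * 3 <= 1/2 ->
  mu = savg (r.+1 * n.+1) G -> (forall f, E f -> G f <= mu - s) ->
  #|E|%:R / #|{: hom}|%:R <= expR (- (lam * s) + 18 * lam ^+ 2 * (r.+1 * n.+1)%:R).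
Proof.
move=> L l0 hl Emu hE.
set M := (r.+1 * n.+1)%N.
have card : #|{: hom}| = #|S M| by rewrite S_full cardsT.
pose F f := expR (- (lam * s)) * expR ((- lam) * (G f - mu)).
have F0 f : 0 <= F f by rewrite /F mulr_ge0 // ltW // expR_gt0.
apply: le_trans (_ : savg M F <= _).
  have cp : (0 < #|{: hom}|)%N by rewrite card; exact: card_S_pos.
  rewrite /savg -card ler_pM2r ?invr_gt0 ?ltr0n //.
  rewrite -sum1_card natr_sum big_mkcond /= S_full.
  apply: le_trans (_ : \sum_f F f <= _); last first.
    by rewrite le_eqVlt; apply/orP; left; apply/eqP; apply: eq_bigl => f; rewrite inE.
  apply: ler_sum => f _; case: ifP => Ef //.
  rewrite /F -expRD; apply: le_trans (expR_ge1Dx _); rewrite lerDl.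
  have := hE f Ef => h; nra.
have -> : savg M F = expR (- (lam * s)) * savg M (fun f => expR ((- lam) * (G f - mu))) by apply: savgZ.
rewrite expRD ler_pM2l ?expR_gt0 //.
rewrite Emu; apply: le_trans (mcd _ _ _) _ => //.
- by rewrite normrN ger0_norm.
- by rewrite sqrrN.
Qed.

Lemma savg_ind (B : pred hom) :
  savg (r.+1 * n.+1) (fun f => (B f)%:R) = #|B|%:R / #|{: hom}|%:R.
Proof.
rewrite /savg S_full cardsT; congr (_ / _).
rewrite -sum1_card natr_sum [RHS]big_mkcond /= [LHS]big_mkcond /=.
apply: eq_bigr => f _.
rewrite (_ : (f \in B) = B f) // inE.
by case: (B f).
Qed.

Lemma Lip_mcut : Lip (fun f => (mcut f)%:R).
Proof.
move=> f g; rewrite lerBlDr -natrD ler_nat addnC; exact: mcut_Lip.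
Qed.

End PartB.

Lemma limn_einf_le (R : realType) (u : (\bar R)^nat) (x : \bar R) :
  (\forall n \near \oo, (u n <= x)%E) -> (limn_einf u <= x)%E.
Proof.
move=> [N _ HN]; apply: le_trans (limn_einf_sup u) _.
rewrite limn_esup_lim; apply: lime_le; first exact: is_cvg_esups.
exists N => // m /= Nm; apply/ereal_supP => _ [k /= mk <-].
by apply: HN; rewrite /= (leq_trans Nm mk).
Qed.

Unset Implicit Arguments.
Theorem mainTheorem17 (R : realType) (r : nat) (eps_c : R) :
  (0 < r)%N ->
  (* eps_c is the limit in probability of mcut(sigma_n)/(rn) *)
  (forall eta : R, 0 < eta ->
     (fun n : nat => prob (fun s : hom_Fr r n => eta < `|(mcut_ratio s : R) - eps_c|))
       @ \oo --> (0 : R)) ->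
  forall eps : R, eps < eps_c ->
  exists delta0 : R, 0 < delta0 /\
    forall delta : R, 0 < delta -> delta < delta0 ->
      Order.lt (limn_einf (fun n : nat =>
         log_rate n (prob (fun s : hom_Fr r n => (mcut_ratio s : R) < eps + delta))))
        (0%E : \bar R).
Proof.
case: r => [//|r] _ Hc eps heps.
pose gam : R := Num.min ((eps_c - eps) / 4) 1.
have g1 : gam <= (eps_c - eps) / 4 by rewrite /gam ge_min lexx.
have g2 : gam <= 1 by rewrite /gam ge_min lexx orbT.
have g0 : 0 < gam by rewrite /gam lt_min ltr01 andbT; lra.
exists ((eps_c - eps) / 2); split; first lra.
move=> delta d0 dlt.
pose lam : R := gam / 36.
pose c : R := gam ^+ 2 / 72 * r.+1%:R.
have c0 : 0 < c by rewrite /c mulr_gt0 ?ltr0n // divr_gt0 // exprn_gt0.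
apply: (@le_lt_trans _ _ (- c)%:E); last by rewrite lte_fin oppr_lt0.
apply: limn_einf_le.
pose a : R := eps_c - gam / 2.
have a1 : 0 < `|a| + 1 by have := normr_ge0 a; lra.
pose e : R := gam / 2 / (`|a| + 1).
have he : 0 < e by rewrite /e; apply: divr_gt0 => //; apply: divr_gt0.
have gam2 : 0 < gam / 2 by apply: divr_gt0.
move: (Hc _ gam2) => /cvgr0_norm_lt /(_ _ he) HH.
move: HH => [N0 _ HN].
exists N0.+1 => // n /= hn.
case: n hn => [//|N] hn.
have HNN := HN N.+1 (ltnW hn).
rewrite /= in HNN.
pose M := (r.+1 * N.+1)%N.
have M0 : (0 : R) < M%:R by rewrite ltr0n muln_gt0.
pose G := fun f : hom_Fr r.+1 N.+1 => ((mcut f)%:R : R).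
have GR f : G f = mcut_ratio f * M%:R by rewrite /mcut_ratio divfK // gt_eqF.
pose mu := savg (r.+1 * N.+1) G.
pose Bp : pred (hom_Fr r.+1 N.+1) := fun f => gam / 2 < `|mcut_ratio f - eps_c|.
pose pB : R := #|Bp|%:R / #|{: hom_Fr r.+1 N.+1}|%:R.
have hpB : `|pB| < e by exact: HNN.
have pB0 : 0 <= pB by rewrite /pB divr_ge0 ?ler0n.
have hpt f : a * M%:R - `|a| * M%:R * (Bp f)%:R <= G f.
  case Bf: (Bp f); rewrite /=.
    rewrite mulr1n mulr1 /G; have h1 := ler_norm a.
    have h2 : (0:R) <= (mcut f)%:R by rewrite ler0n.
    have : (a - `|a|) * M%:R <= 0 by rewrite pmulr_lle0 // subr_le0.
    lra.
  rewrite mulr0n mulr0 subr0 GR ler_pM2r //.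
  move/negbT: Bf; rewrite /Bp; rewrite -leNgt ler_norml => /andP[h1 h2].
  rewrite /a; lra.
have mu_lb : (eps_c - gam) * M%:R <= mu.
  apply: le_trans (savg_le _ hpt).
  rewrite savgB savg_cst savgZ savg_ind -/pB.
  have hpB' : pB <= e by have := ler_norm pB; lra.
  have : (`|a| + 1) * pB <= gam / 2.
    have ee : (`|a| + 1) * e = gam / 2 by rewrite /e mulrC divfK // gt_eqF.
    by rewrite -ee; exact: (ler_wpM2l (ltW a1) hpB').
  move=> h; have h3 : `|a| * pB <= gam / 2 by nra.
  have := ler_wpM2r (ltW M0) h3; rewrite /a; lra.
have hE f : mcut_ratio f < eps + delta -> G f <= mu - gam * M%:R.
  move=> h; rewrite GR.
  have h2 : mcut_ratio f <= eps_c - 2 * gam by lra.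
  have := ler_wpM2r (ltW M0) h2; lra.
have l0 : 0 <= lam by rewrite /lam divr_ge0 // ltW.
have hl : lam * 3 <= 1 / 2 by rewrite /lam; lra.
have hch := @chernoff R r N G (fun f => mcut_ratio f < eps + delta) mu (gam * M%:R) lam
   (@Lip_mcut R r N) l0 hl erefl hE.
have hexp : - (lam * (gam * M%:R)) + 18 * lam ^+ 2 * (r.+1 * N.+1)%:R = - (c * N.+1%:R).
  by rewrite /lam /c /M natrM; field.
rewrite hexp in hch.
rewrite /log_rate; case: eqP => [_|pne]; first by rewrite leNye.
rewrite lee_fin.
set p := prob _ in pne *.
have p0 : 0 < p.
  rewrite lt_neqAle eq_sym; apply/andP; split; first by apply/eqP.
  by rewrite /p /prob divr_ge0 ?ler0n.
have lnb : ln p <= - (c * N.+1%:R).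
  rewrite -[X in _ <= X]expRK ler_ln ?posrE ?expR_gt0 //.
have N1 : (0 : R) < N.+1%:R by rewrite ltr0n.
rewrite ler_pdivrMr //; lra.
Qed.
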